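(* Let $\boldsymbol A$ be sampled from the planted dense $m\times n$-submatrix model with planted sets $\bar U,\bar V$ ($|\bar U|=m\le n=|\bar V|$), probabilities $q>p$, and let $\gamma>0$. For $i\in\bar U$ let $\bar\mu_i$ be the number of zero entries of $\boldsymbol A$ in row $i$ among the columns $\bar V$; for $j\in\bar V$ let $\bar\nu_j$ be the number of zero entries of $\boldsymbol A$ in column $j$ among the rows $\bar U$; let $s=\sum_{i\in\bar U}\bar\mu_i$. Set $$ \tau=12\left(1+\frac1{\sqrt m}\right)\max\left\{\sqrt{\sigma_q^2\frac{\log N}{m}},\ \frac{\log N}{m}\right\},\qquad \tilde\lambda=\gamma(1-q)+\gamma\tau, $$ and for $i\in\bar U$, $j\in\bar V$ define $\Lambda_{ij}=y_i+z_j$, where $$ y_i=\frac1n\left(\tilde\lambda\frac{n^2}{m+n}-\gamma\bar\mu_i+\gamma\frac{s}{m+n}\right),\qquad z_j=\frac1m\left(\tilde\lambda\frac{m^2}{m+n}-\gamma\bar\nu_j+\gamma\frac{s}{m+n}\right). $$ Then with high probability $\Lambda_{ij}\ge 0$ for all $i\in\bar U$, $j\in\bar V$.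
   Context: Planted dense $m\times n$-submatrix model: a random $M\times N$ binary matrix $\boldsymbol A$ with $M\le N$, in which entries indexed by $\bar U\times\bar V$ equal $1$ independently with probability $q$ and all other entries equal $1$ independently with probability $p<q$. $\sigma_q^2=q(1-q)$. Parameters may depend on $N$; ''with high probability'' means with probability at least $1-\hat c_1N^{-\hat c_2}$ for constants $\hat c_1,\hat c_2>0$, as $N\to\infty$. *)

(* Defs.v *)
From HB Require Import structures.
From mathcomp Require Import all_boot.
From Stdlib Require Import Reals.
Set Implicit Arguments. Unset Strict Implicit. Unset Printing Implicit Defensive.

Open Scope R_scope.

Definition bmat (M N : nat) := {ffun 'I_M * 'I_N -> bool}.

Definition entry_prob (M N : nat) (U : {set 'I_M}) (V : {set 'I_N}) (p q : R)
  (i : 'I_M) (j : 'I_N) : R :=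
  if (i \in U) && (j \in V) then q else p.

Definition model_mass (M N : nat) (U : {set 'I_M}) (V : {set 'I_N}) (p q : R)
  (A : bmat M N) : R :=
  \big[Rmult/1]_(ij : 'I_M * 'I_N)
     (if A ij then entry_prob U V p q ij.1 ij.2
      else 1 - entry_prob U V p q ij.1 ij.2).

Definition model_prob (M N : nat) (U : {set 'I_M}) (V : {set 'I_N}) (p q : R)
  (E : pred (bmat M N)) : R :=
  \big[Rplus/0]_(A : bmat M N | E A) model_mass U V p q A.

Definition mu_bar (M N : nat) (V : {set 'I_N}) (A : bmat M N) (i : 'I_M) : nat :=
  #|[set j in V | ~~ A (i, j)]|.

Definition nu_bar (M N : nat) (U : {set 'I_M}) (A : bmat M N) (j : 'I_N) : nat :=
  #|[set i in U | ~~ A (i, j)]|.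

Definition s_bar (M N : nat) (U : {set 'I_M}) (V : {set 'I_N}) (A : bmat M N) : nat :=
  (\sum_(i in U) mu_bar V A i)%N.

Definition sigma_q2 (q : R) : R := q * (1 - q).

Definition tau (N m : nat) (q : R) : R :=
  12 * (1 + 1 / sqrt (INR m)) *
  Rmax (sqrt (sigma_q2 q * ln (INR N) / INR m)) (ln (INR N) / INR m).

Definition lambda_tilde (N m : nat) (q gamma : R) : R :=
  gamma * (1 - q) + gamma * tau N m q.

Definition Lambda (N M : nat) (U : {set 'I_M}) (V : {set 'I_N}) (q gamma : R)
  (A : bmat M N) (i : 'I_M) (j : 'I_N) : R :=
  let m := INR #|U| in
  let n := INR #|V| in
  let lt := lambda_tilde N #|U| q gamma in
  let s := INR (s_bar U V A) in
  let y := / n * (lt * n ^ 2 / (m + n) - gamma * INR (mu_bar V A i)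
                  + gamma * s / (m + n)) in
  let z := / m * (lt * m ^ 2 / (m + n) - gamma * INR (nu_bar U A j)
                  + gamma * s / (m + n)) in
  y + z.

Definition Rleb (x y : R) : bool := if Rle_dec x y then true else false.

Definition Lambda_nonneg_event (N M : nat) (U : {set 'I_M}) (V : {set 'I_N})
  (q gamma : R) : pred (bmat M N) :=
  fun A => [forall i : 'I_M, forall j : 'I_N,
              ((i \in U) && (j \in V)) ==> Rleb 0 (Lambda U V q gamma A i j)].

(* Main.v *)
Require Import Defs.
From HB Require Import structures.
From mathcomp Require Import all_boot.
From Stdlib Require Import Reals Lra.
Open Scope R_scope.
Set Implicit Arguments. Unset Strict Implicit.

Lemma RplusA : associative Rplus. Proof. move=> x y z; ring. Qed.
Lemma RmultA : associative Rmult. Proof. move=> x y z; ring. Qed.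
HB.instance Definition _ := Monoid.isComLaw.Build R 0 Rplus RplusA Rplus_comm Rplus_0_l.
HB.instance Definition _ := Monoid.isComLaw.Build R 1 Rmult RmultA Rmult_comm Rmult_1_l.
Lemma Rmult0l : left_zero 0 Rmult. Proof. move=> x; exact: Rmult_0_l. Qed.
Lemma Rmult0r : right_zero 0 Rmult. Proof. move=> x; exact: Rmult_0_r. Qed.
HB.instance Definition _ := Monoid.isMulLaw.Build R 0 Rmult Rmult0l Rmult0r.
Lemma RDl : left_distributive Rmult Rplus. Proof. move=> x y z; ring. Qed.
Lemma RDr : right_distributive Rmult Rplus. Proof. move=> x y z; ring. Qed.
HB.instance Definition _ := Monoid.isAddLaw.Build R Rmult Rplus RDl RDr.

Lemma pow_exp x n : exp x ^ n = exp (INR n * x).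
Proof.
elim: n => [|n IH]; first by rewrite /= Rmult_0_l exp_0.
rewrite [exp x ^ n.+1]/= IH -exp_plus S_INR; congr exp; ring.
Qed.

Lemma iter_Rmult n w : iter n (Rmult w) 1 = w ^ n.
Proof. by elim: n => //= n ->. Qed.
Lemma iter_Rplus n w : iter n (Rplus w) 0 = INR n * w.
Proof. elim: n => [|n IH]; first by rewrite /=; ring. rewrite [iter _ _ _]/= IH S_INR; ring. Qed.

Lemma prod_if (T : finType) (P : pred T) w :
  \big[Rmult/1]_(k : T) (if P k then w else 1) = w ^ #|P|.
Proof. by rewrite -big_mkcond big_const iter_Rmult. Qed.

Lemma sum_le (T : finType) (P : pred T) (F G : T -> R) :
  (forall k, P k -> F k <= G k) ->
  \big[Rplus/0]_(k | P k) F k <= \big[Rplus/0]_(k | P k) G k.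
Proof. move=> H; apply: (big_ind2 Rle) => //; [lra| move=> *; lra]. Qed.

Lemma sum_ge0 (T : finType) (P : pred T) (F : T -> R) :
  (forall k, P k -> 0 <= F k) -> 0 <= \big[Rplus/0]_(k | P k) F k.
Proof. move=> H; apply: (big_ind (fun x => 0 <= x)) => //; [lra| move=> *; lra]. Qed.

Lemma prod_ge0 (T : finType) (P : pred T) (F : T -> R) :
  (forall k, P k -> 0 <= F k) -> 0 <= \big[Rmult/1]_(k | P k) F k.
Proof. move=> H; apply: (big_ind (fun x => 0 <= x)) => //; [lra| move=> *; exact: Rmult_le_pos]. Qed.

Lemma Rleb_true x y : Rleb x y = true <-> x <= y.
Proof. rewrite /Rleb; case: Rle_dec => //. Qed.

Definition cnt (M N : nat) (S : {set 'I_M * 'I_N}) (A : bmat M N) : nat :=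
  #|[set k in S | ~~ A k]|.

Lemma mgf (M N : nat) (U : {set 'I_M}) (V : {set 'I_N}) (p q w : R)
  (S : {set 'I_M * 'I_N}) :
  S \subset setX U V ->
  \big[Rplus/0]_(A : bmat M N) (model_mass U V p q A * w ^ cnt S A)
  = (q + (1 - q) * w) ^ #|S|.
Proof.
move=> HS.
pose e (k : 'I_M * 'I_N) := entry_prob U V p q k.1 k.2.
pose h (k : 'I_M * 'I_N) (b : bool) :=
  (if b then e k else 1 - e k) * (if (k \in S) && ~~ b then w else 1).
have E : forall A : bmat M N,
    model_mass U V p q A * w ^ cnt S A = \big[Rmult/1]_k h k (A k).
  move=> A; rewrite /h big_split /=; congr Rmult.
  rewrite prod_if /cnt; congr pow.
  by apply: eq_card => k; rewrite !inE.
rewrite (eq_bigr _ (fun A _ => E A)).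
rewrite -(bigA_distr_bigA h).
rewrite -(prod_if (fun k => k \in S)).
apply: eq_bigr => k _.
rewrite big_bool /h /=.
case kS: (k \in S).
  have : k \in setX U V by apply: (subsetP HS).
  rewrite inE => /andP [kU kV].
  rewrite /e /entry_prob kU kV /=; ring.
rewrite /=; ring.
Qed.

Lemma sum_sub (T : finType) (P : pred T) (F : T -> R) :
  (forall k, 0 <= F k) -> \big[Rplus/0]_(k | P k) F k <= \big[Rplus/0]_k F k.
Proof.
move=> H; rewrite big_mkcond; apply: sum_le => k _.
case: (P k); [lra | exact: H].
Qed.

Lemma mass_ge0 (M N : nat) (U : {set 'I_M}) (V : {set 'I_N}) (p q : R) (A : bmat M N) :
  0 <= p -> p <= 1 -> 0 <= q -> q <= 1 -> 0 <= model_mass U V p q A.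
Proof.
move=> h1 h2 h3 h4; apply: prod_ge0 => k _; rewrite /entry_prob.
by case: (A k); case: ifP => _; lra.
Qed.

Lemma markov (M N : nat) (U : {set 'I_M}) (V : {set 'I_N}) (p q : R)
  (S : {set 'I_M * 'I_N}) (P : pred (bmat M N)) (l a : R) :
  0 <= p -> p <= 1 -> 0 <= q -> q <= 1 ->
  S \subset setX U V ->
  (forall A, P A -> a <= l * INR (cnt S A)) ->
  \big[Rplus/0]_(A : bmat M N | P A) model_mass U V p q A
  <= exp (- a) * (q + (1 - q) * exp l) ^ #|S|.
Proof.
move=> hp0 hp1 hq0 hq1 HS HP.
rewrite -(mgf p q (exp l) HS) big_distrr /=.
apply: (Rle_trans _ (\big[Rplus/0]_(A : bmat M N | P A)
   (exp (- a) * (model_mass U V p q A * exp l ^ cnt S A)))); last first.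
  apply: sum_sub => A.
  apply: Rmult_le_pos; [exact: Rlt_le (exp_pos _)|].
  apply: Rmult_le_pos; [exact: mass_ge0 | apply: pow_le; exact: Rlt_le (exp_pos _)].
apply: sum_le => A PA.
have hm : 0 <= model_mass U V p q A by apply: mass_ge0.
rewrite pow_exp.
have -> : exp (- a) * (model_mass U V p q A * exp (INR (cnt S A) * l))
  = model_mass U V p q A * exp (l * INR (cnt S A) - a).
  rewrite [_ - a]Rplus_comm exp_plus; ring_simplify; rewrite (Rmult_comm l); ring.
have := exp_ineq1_le (l * INR (cnt S A) - a).
have := HP A PA.
move=> h1 h2.
have h3 : 1 <= exp (l * INR (cnt S A) - a) by lra.
have := Rmult_le_compat_l _ _ _ hm h3. lra.
Qed.
Unset Implicit Arguments.
Lemma exp_le x y : x <= y -> exp x <= exp y.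
Proof. move=> [h|->]; [left; exact: exp_increasing| lra]. Qed.

Lemma exp_inv_bound x : 0 <= x < 1 -> exp x <= / (1 - x).
Proof.
move=> hx.
have h1 := exp_ineq1_le (- x).
rewrite exp_Ropp in h1.
have hp := exp_pos x.
have h2 : 0 < 1 - x by lra.
apply: (Rmult_le_reg_l (1 - x)) => //.
rewrite Rinv_r; last lra.
apply: (Rmult_le_reg_r (/ exp x)); first exact: Rinv_0_lt_compat.
rewrite Rmult_assoc Rinv_r; last lra. lra.
Qed.

Lemma phi_ge0 l : 0 <= exp l - 1 - l.
Proof. have := exp_ineq1_le l; lra. Qed.
Lemma psi_ge0 l : 0 <= exp (- l) - 1 + l.
Proof. have := exp_ineq1_le (- l); lra. Qed.

Lemma phi_small l : 0 <= l <= 1/3 -> exp l - 1 - l <= 3/2 * l ^ 2.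
Proof.
move=> hl.
have h := exp_inv_bound l ltac:(lra).
have e : / (1 - l) = 1 + l + l ^ 2 / (1 - l) by field; lra.
have h3 : l ^ 2 / (1 - l) <= 3/2 * l ^ 2.
  apply: (Rmult_le_reg_r (1 - l)); first lra.
  rewrite /Rdiv Rmult_assoc Rinv_l; last lra.
  have : 0 <= l ^ 2 by apply: pow2_ge_0. nra.
lra.
Qed.

Lemma psi_small l : 0 <= l <= 1/3 -> exp (- l) - 1 + l <= 3/2 * l ^ 2.
Proof.
move=> hl.
have h1 := exp_ineq1_le l.
have hp := exp_pos l.
rewrite exp_Ropp.
have h2 : / exp l <= / (1 + l) by apply: Rinv_le_contravar; lra.
have e : / (1 + l) = 1 - l + l ^ 2 / (1 + l) by field; lra.
have h3 : l ^ 2 / (1 + l) <= l ^ 2.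
  apply: (Rmult_le_reg_r (1 + l)); first lra.
  rewrite /Rdiv Rmult_assoc Rinv_l; last lra.
  have : 0 <= l ^ 2 by apply: pow2_ge_0. nra.
have : 0 <= l ^ 2 by apply: pow2_ge_0.
lra.
Qed.

Lemma phi_half : exp (1/2) - 1 - 1/2 <= 9/50.
Proof.
have h := exp_inv_bound (1/16) ltac:(lra).
have e : exp (1/2) = exp (1/16) ^ 8 by rewrite pow_exp; congr exp; simpl; lra.
have h2 : exp (1/16) ^ 8 <= (/ (1 - 1/16)) ^ 8.
  apply: pow_incr; split; [exact: Rlt_le (exp_pos _)| exact: h].
have e2 : / (1 - 1/16) = 16/15 by field.
rewrite e2 in h2. rewrite e.
have : (16/15)^8 <= 168/100 by simpl; lra.
lra.
Qed.

Lemma psi_half : exp (- (1/2)) - 1 + 1/2 <= 9/50.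
Proof.
have h1 := exp_ineq1_le (1/2).
have hp := exp_pos (1/2).
rewrite exp_Ropp.
have h2 : / exp (1/2) <= / (1 + 1/2) by apply: Rinv_le_contravar; lra.
have e : / (1 + 1/2) = 2/3 by field.
lra.
Qed.

Lemma choose (k s2 L t : R) (th : R -> R) :
  0 < L -> 0 <= s2 -> 0 <= k -> 16 * k * s2 * L <= t ^ 2 -> 4 * L <= t ->
  (forall l, 0 <= l <= 1/3 -> th l <= 3/2 * l ^ 2) -> th (1/2) <= 9/50 ->
  (forall l, 0 <= th l) ->
  exists l, 0 <= l /\ 2 * k * s2 * th l - l * t <= - (6/5) * L.
Proof.
move=> hL hs hk ht1 ht2 hsm hh h0.
set K := 2 * k * s2.
have hK : 0 <= K by rewrite /K; apply: Rmult_le_pos => //; lra.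
case: (Rle_lt_dec t K) => hc.
- have Kp : 0 < K by lra.
  exists (t / (3 * K)); split.
    apply: Rmult_le_pos; [lra| left; apply: Rinv_0_lt_compat; lra].
  have hl : 0 <= t / (3 * K) <= 1/3.
    split; first (apply: Rmult_le_pos; [lra| left; apply: Rinv_0_lt_compat; lra]).
    apply: (Rmult_le_reg_r (3 * K)); first lra.
    replace (t / (3 * K) * (3 * K)) with t by (field; lra); lra.
  have h1 := hsm _ hl.
  have h2 : K * th (t / (3 * K)) <= K * (3/2 * (t / (3 * K)) ^ 2)
    by apply: Rmult_le_compat_l.
  have e : K * (3/2 * (t / (3 * K)) ^ 2) - t / (3 * K) * t = - (t ^ 2 / (6 * K))
    by field; lra.
  have h3 : 8 * K * L <= t ^ 2 by rewrite /K; lra.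
  have h4 : (4/3) * L <= t ^ 2 / (6 * K).
    apply: (Rmult_le_reg_r (6 * K)); first lra.
    replace (t ^ 2 / (6 * K) * (6 * K)) with (t ^ 2) by (field; lra); lra.
  rewrite -/K. lra.
- exists (1/2); split; first lra.
  have h1 := h0 (1/2).
  have h2 : K * th (1/2) <= t * (9/50) by apply: Rmult_le_compat; lra.
  rewrite -/K. lra.
Qed.

Lemma pow_le_exp B x k : 0 <= B -> B <= exp x -> B ^ k <= exp (INR k * x).
Proof. move=> h0 h1; rewrite -pow_exp; apply: pow_incr; lra. Qed.

Lemma up_a q l k t : 0 <= q <= 1 ->
  exp (- (l * (INR k * (1 - q) + t))) * (q + (1 - q) * exp l) ^ k
  <= exp (INR k * (1 - q) * (exp l - 1 - l) - l * t).
Proof.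
move=> hq.
have hb : q + (1 - q) * exp l <= exp ((1 - q) * (exp l - 1)).
  have := exp_ineq1_le ((1 - q) * (exp l - 1)); lra.
have hb0 : 0 <= q + (1 - q) * exp l.
  have := exp_pos l; nra.
have := pow_le_exp _ _ k hb0 hb => h.
apply: Rle_trans (Rmult_le_compat_l _ _ _ (Rlt_le _ _ (exp_pos _)) h) _.
rewrite -exp_plus; apply: exp_le; right; ring.
Qed.

Lemma up_b q l k t : 0 <= q <= 1 ->
  exp (- (l * (INR k * (1 - q) + t))) * (q + (1 - q) * exp l) ^ k
  <= exp (INR k * q * (exp (- l) - 1 + l) - l * t).
Proof.
move=> hq.
have hee : exp l * exp (- l) = 1 by rewrite -exp_plus Rplus_opp_r exp_0.
have e : q + (1 - q) * exp l = exp l * (1 + q * (exp (- l) - 1)).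
  have h : exp l * (1 + q * (exp (- l) - 1)) = exp l + q * (exp l * exp (- l)) - q * exp l by ring.
  rewrite hee in h; lra.
have hb : q + (1 - q) * exp l <= exp (l + q * (exp (- l) - 1)).
  rewrite e exp_plus; apply: Rmult_le_compat_l; first exact: Rlt_le (exp_pos _).
  have := exp_ineq1_le (q * (exp (- l) - 1)); lra.
have hb0 : 0 <= q + (1 - q) * exp l.
  have := exp_pos l; nra.
have := pow_le_exp _ _ k hb0 hb => h.
apply: Rle_trans (Rmult_le_compat_l _ _ _ (Rlt_le _ _ (exp_pos _)) h) _.
rewrite -exp_plus; apply: exp_le; right; ring.
Qed.

Lemma low_a q l k t : 0 <= q <= 1 ->
  exp (- (- l * (INR k * (1 - q) - t))) * (q + (1 - q) * exp (- l)) ^ k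
  <= exp (INR k * (1 - q) * (exp (- l) - 1 + l) - l * t).
Proof.
move=> hq.
have hb : q + (1 - q) * exp (- l) <= exp ((1 - q) * (exp (- l) - 1)).
  have := exp_ineq1_le ((1 - q) * (exp (- l) - 1)); lra.
have hb0 : 0 <= q + (1 - q) * exp (- l).
  have := exp_pos (- l); nra.
have := pow_le_exp _ _ k hb0 hb => h.
apply: Rle_trans (Rmult_le_compat_l _ _ _ (Rlt_le _ _ (exp_pos _)) h) _.
rewrite -exp_plus; apply: exp_le; right; ring.
Qed.

Lemma low_b q l k t : 0 <= q <= 1 ->
  exp (- (- l * (INR k * (1 - q) - t))) * (q + (1 - q) * exp (- l)) ^ k
  <= exp (INR k * q * (exp l - 1 - l) - l * t).
Proof.
move=> hq.
have hee : exp (- l) * exp l = 1 by rewrite -exp_plus Rplus_opp_l exp_0.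
have e : q + (1 - q) * exp (- l) = exp (- l) * (1 + q * (exp l - 1)).
  have h : exp (- l) * (1 + q * (exp l - 1)) = exp (- l) + q * (exp (- l) * exp l) - q * exp (- l) by ring.
  rewrite hee in h; lra.
have hb : q + (1 - q) * exp (- l) <= exp (- l + q * (exp l - 1)).
  rewrite e exp_plus; apply: Rmult_le_compat_l; first exact: Rlt_le (exp_pos _).
  have := exp_ineq1_le (q * (exp l - 1)); lra.
have hb0 : 0 <= q + (1 - q) * exp (- l).
  have := exp_pos (- l); nra.
have := pow_le_exp _ _ k hb0 hb => h.
apply: Rle_trans (Rmult_le_compat_l _ _ _ (Rlt_le _ _ (exp_pos _)) h) _.
rewrite -exp_plus; apply: exp_le; right; ring.
Qed.

Lemma tail_up (M N : nat) (U : {set 'I_M}) (V : {set 'I_N}) (p q : R)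
  (S : {set 'I_M * 'I_N}) (P : pred (bmat M N)) (t L : R) :
  0 <= p -> p < q -> q <= 1 -> S \subset setX U V -> 0 < L ->
  16 * INR #|S| * (q * (1 - q)) * L <= t ^ 2 -> 4 * L <= t ->
  (forall A, P A -> INR #|S| * (1 - q) + t <= INR (cnt S A)) ->
  \big[Rplus/0]_(A : bmat M N | P A) model_mass U V p q A <= exp (- (6/5) * L).
Proof.
move=> hp hpq hq HS hL ht1 ht2 HP.
have hk : 0 <= INR #|S| by apply: pos_INR.
have hs2 : 0 <= q * (1 - q) by nra.
have hq' : 0 <= q <= 1 by lra.
case: (Rle_lt_dec (1/2) q) => hc.
- have [l [hl0 hl]] := choose (INR #|S|) (q * (1 - q)) L t (fun l => exp l - 1 - l)
     hL hs2 hk ht1 ht2 phi_small phi_half phi_ge0.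
  apply: Rle_trans (@markov _ _ U V p q S P l (l * (INR #|S| * (1 - q) + t)) _ _ _ _ HS _) _;
    try lra.
    move=> A PA; apply: Rmult_le_compat_l => //; exact: HP.
  apply: Rle_trans (up_a q l #|S| t hq') _.
  apply: exp_le.
  have := phi_ge0 l => hphi.
  have : 0 <= (2 * q - 1) * (1 - q) * INR #|S| * (exp l - 1 - l).
    repeat apply: Rmult_le_pos; lra.
  lra.
- have [l [hl0 hl]] := choose (INR #|S|) (q * (1 - q)) L t (fun l => exp (- l) - 1 + l)
     hL hs2 hk ht1 ht2 psi_small psi_half psi_ge0.
  apply: Rle_trans (@markov _ _ U V p q S P l (l * (INR #|S| * (1 - q) + t)) _ _ _ _ HS _) _;
    try lra.
    move=> A PA; apply: Rmult_le_compat_l => //; exact: HP.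
  apply: Rle_trans (up_b q l #|S| t hq') _.
  apply: exp_le.
  have := psi_ge0 l => hpsi.
  have : 0 <= (1 - 2 * q) * q * INR #|S| * (exp (- l) - 1 + l).
    repeat apply: Rmult_le_pos; lra.
  lra.
Qed.

Lemma tail_low (M N : nat) (U : {set 'I_M}) (V : {set 'I_N}) (p q : R)
  (S : {set 'I_M * 'I_N}) (P : pred (bmat M N)) (t L : R) :
  0 <= p -> p < q -> q <= 1 -> S \subset setX U V -> 0 < L ->
  16 * INR #|S| * (q * (1 - q)) * L <= t ^ 2 -> 4 * L <= t ->
  (forall A, P A -> INR (cnt S A) <= INR #|S| * (1 - q) - t) ->
  \big[Rplus/0]_(A : bmat M N | P A) model_mass U V p q A <= exp (- (6/5) * L).
Proof.
move=> hp hpq hq HS hL ht1 ht2 HP.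
have hk : 0 <= INR #|S| by apply: pos_INR.
have hs2 : 0 <= q * (1 - q) by nra.
have hq' : 0 <= q <= 1 by lra.
case: (Rle_lt_dec (1/2) q) => hc.
- have [l [hl0 hl]] := choose (INR #|S|) (q * (1 - q)) L t (fun l => exp (- l) - 1 + l)
     hL hs2 hk ht1 ht2 psi_small psi_half psi_ge0.
  apply: Rle_trans (@markov _ _ U V p q S P (- l) (- l * (INR #|S| * (1 - q) - t)) _ _ _ _ HS _) _;
    try lra.
    move=> A PA; have := HP A PA => h; nra.
  apply: Rle_trans (low_a q l #|S| t hq') _.
  apply: exp_le.
  have := psi_ge0 l => hpsi.
  have : 0 <= (2 * q - 1) * (1 - q) * INR #|S| * (exp (- l) - 1 + l).
    repeat apply: Rmult_le_pos; lra.
  lra.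
- have [l [hl0 hl]] := choose (INR #|S|) (q * (1 - q)) L t (fun l => exp l - 1 - l)
     hL hs2 hk ht1 ht2 phi_small phi_half phi_ge0.
  apply: Rle_trans (@markov _ _ U V p q S P (- l) (- l * (INR #|S| * (1 - q) - t)) _ _ _ _ HS _) _;
    try lra.
    move=> A PA; have := HP A PA => h; nra.
  apply: Rle_trans (low_b q l #|S| t hq') _.
  apply: exp_le.
  have := phi_ge0 l => hphi.
  have : 0 <= (1 - 2 * q) * q * INR #|S| * (exp l - 1 - l).
    repeat apply: Rmult_le_pos; lra.
  lra.
Qed.

Set Implicit Arguments.
Lemma card_row (M N : nat) (i : 'I_M) (W : {set 'I_N}) :
  #|[set k : 'I_M * 'I_N | (k.1 == i) && (k.2 \in W)]| = #|W|.
Proof.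
have -> : [set k : 'I_M * 'I_N | (k.1 == i) && (k.2 \in W)] = (fun j => (i, j)) @: W.
  apply/setP => [[a b]]; rewrite inE /=.
  apply/andP/imsetP => [[/eqP -> hb]|[j hj [-> ->]]].
    by exists b.
  by rewrite eqxx.
by rewrite card_imset // => x y [].
Qed.

Lemma card_col (M N : nat) (j : 'I_N) (W : {set 'I_M}) :
  #|[set k : 'I_M * 'I_N | (k.1 \in W) && (k.2 == j)]| = #|W|.
Proof.
have -> : [set k : 'I_M * 'I_N | (k.1 \in W) && (k.2 == j)] = (fun i => (i, j)) @: W.
  apply/setP => [[a b]]; rewrite inE /=.
  apply/andP/imsetP => [[ha /eqP ->]|[i hi [-> ->]]].
    by exists a.
  by rewrite eqxx.
by rewrite card_imset // => x y [].
Qed.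

Lemma cnt_row (M N : nat) (V : {set 'I_N}) (A : bmat M N) (i : 'I_M) :
  cnt [set k : 'I_M * 'I_N | (k.1 == i) && (k.2 \in V)] A = mu_bar V A i.
Proof.
rewrite /cnt /mu_bar -(card_row i); apply: eq_card => [[a b]]; rewrite !inE /=.
case: eqP => //= -> ; by [].
Qed.

Lemma cnt_col (M N : nat) (U : {set 'I_M}) (A : bmat M N) (j : 'I_N) :
  cnt [set k : 'I_M * 'I_N | (k.1 \in U) && (k.2 == j)] A = nu_bar U A j.
Proof.
rewrite /cnt /nu_bar -(card_col j); apply: eq_card => [[a b]]; rewrite !inE /=.
case: (b =P j) => [->|]; by rewrite ?andbT ?andbF.
Qed.

Lemma cnt_all (M N : nat) (U : {set 'I_M}) (V : {set 'I_N}) (A : bmat M N) :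
  cnt (setX U V) A = s_bar U V A.
Proof.
rewrite /cnt /s_bar /mu_bar.
rewrite -sum1_card.
have -> : \sum_(i in U) #|[set j in V | ~~ A (i, j)]|
   = \sum_(i in U) \sum_(j | (j \in V) && ~~ A (i, j)) 1.
  apply: eq_bigr => i _; rewrite -sum1_card; apply: eq_bigl => j; by rewrite inE.
rewrite pair_big_dep; apply: eq_bigl => [[a b]]; by rewrite !inE /= andbA.
Qed.
Unset Implicit Arguments.
Lemma det (m n g T r mu nu s : R) : 0 < m -> 0 < n -> 0 < g ->
  mu < n * r + n * (T / 3) -> nu < m * r + m * (T / 3) ->
  m * n * r - m * n * (T / 3) < s ->
  0 <= / n * ((g * r + g * T) * n ^ 2 / (m + n) - g * mu + g * s / (m + n))
     + / m * ((g * r + g * T) * m ^ 2 / (m + n) - g * nu + g * s / (m + n)).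
Proof.
move=> hm hn hg h1 h2 h3.
have -> : / n * ((g * r + g * T) * n ^ 2 / (m + n) - g * mu + g * s / (m + n))
     + / m * ((g * r + g * T) * m ^ 2 / (m + n) - g * nu + g * s / (m + n))
  = g / (m * n) * (m * n * (r + T) - m * mu - n * nu + s) by field; lra.
apply: Rmult_le_pos.
  apply: Rmult_le_pos; [lra| left; apply: Rinv_0_lt_compat; nra].
have : m * mu < m * (n * r + n * (T / 3)) by apply: Rmult_lt_compat_l.
have : n * nu < n * (m * r + m * (T / 3)) by apply: Rmult_lt_compat_l.
nra.
Qed.

Lemma tfacts (k m u s2 L : R) : 0 < m -> m <= k -> 0 <= s2 -> 0 < L -> 0 <= u ->
  16 * s2 * L / m <= u ^ 2 -> 4 * L / m <= u ->
  16 * k * s2 * L <= (k * u) ^ 2 /\ 4 * L <= k * u.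
Proof.
move=> hm hmk hs hL hu h1 h2.
have h1' : 16 * s2 * L <= u ^ 2 * m.
  have := Rmult_le_compat_r m _ _ (Rlt_le _ _ hm) h1.
  by rewrite /Rdiv Rmult_assoc Rinv_l; [rewrite Rmult_1_r | lra].
have h2' : 4 * L <= u * m.
  have := Rmult_le_compat_r m _ _ (Rlt_le _ _ hm) h2.
  by rewrite /Rdiv Rmult_assoc Rinv_l; [rewrite Rmult_1_r | lra].
have hk : 0 < k by lra.
split.
- apply: (Rmult_le_reg_r m) => //.
  have : 16 * s2 * L * k * m <= 16 * s2 * L * k * k.
    apply: Rmult_le_compat_l => //. apply: Rmult_le_pos; [nra| lra].
  have : 16 * s2 * L * (k * k) <= u ^ 2 * m * (k * k).
    apply: Rmult_le_compat_r => //; nra.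
  nra.
- have : u * m <= u * k by apply: Rmult_le_compat_l.
  nra.
Qed.

Lemma sum_ge_one (I : finType) (I0 : pred I) (g : I -> R) i :
  (forall i, 0 <= g i) -> I0 i -> g i <= \big[Rplus/0]_(i' | I0 i') g i'.
Proof.
move=> h0 hi; rewrite (bigD1 i) //=.
have := @sum_ge0 _ (fun i' => I0 i' && (i' != i)) g (fun k _ => h0 k). lra.
Qed.

Lemma union3 (T I J : finType) (f : T -> R) (P : pred T) (I0 : pred I) (J0 : pred J)
  (Q1 : I -> pred T) (Q2 : J -> pred T) (Q3 : pred T) :
  (forall x, 0 <= f x) ->
  (forall x, P x -> (exists i, I0 i /\ Q1 i x) \/ (exists j, J0 j /\ Q2 j x) \/ Q3 x) ->
  \big[Rplus/0]_(x | P x) f x <=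
  \big[Rplus/0]_(i | I0 i) \big[Rplus/0]_(x | Q1 i x) f x
  + \big[Rplus/0]_(j | J0 j) \big[Rplus/0]_(x | Q2 j x) f x
  + \big[Rplus/0]_(x | Q3 x) f x.
Proof.
move=> hf hP.
have e1 : \big[Rplus/0]_(i | I0 i) \big[Rplus/0]_(x | Q1 i x) f x
    = \big[Rplus/0]_x \big[Rplus/0]_(i | I0 i) (if Q1 i x then f x else 0).
  rewrite (exchange_big Rplus) /=. apply: eq_bigr => i _. by rewrite big_mkcond.
have e2 : \big[Rplus/0]_(j | J0 j) \big[Rplus/0]_(x | Q2 j x) f x
    = \big[Rplus/0]_x \big[Rplus/0]_(j | J0 j) (if Q2 j x then f x else 0).
  rewrite (exchange_big Rplus) /=. apply: eq_bigr => j _. by rewrite big_mkcond.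
rewrite e1 e2 [X in _ <= _ + X]big_mkcond -!big_split /= big_mkcond.
apply: sum_le => x _.
have g1 : forall i, 0 <= (if Q1 i x then f x else 0) by move=> i; case: (Q1 i x) => //; lra.
have g2 : forall j, 0 <= (if Q2 j x then f x else 0) by move=> j; case: (Q2 j x) => //; lra.
have s1 := @sum_ge0 _ I0 _ (fun i _ => g1 i).
have s2 := @sum_ge0 _ J0 _ (fun j _ => g2 j).
have g3 : 0 <= (if Q3 x then f x else 0) by case: (Q3 x) => //; lra.
case Px: (P x); last lra.
case: (hP x Px) => [[i [hi hq]]|[[j [hj hq]]|hq]].
- have := @sum_ge_one _ I0 (fun i => if Q1 i x then f x else 0) i g1 hi.
  rewrite /= hq. lra.
- have := @sum_ge_one _ J0 (fun j => if Q2 j x then f x else 0) j g2 hj.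
  rewrite /= hq. lra.
- rewrite hq in g3 *. lra.
Qed.

Lemma Rleb_false x y : Rleb x y = false -> y < x.
Proof. rewrite /Rleb; case: Rle_dec => // h _; lra. Qed.

Theorem mainTheorem4 :
  exists c1 c2 : R, 0 < c1 /\ 0 < c2 /\
  exists N0 : nat,
  forall (N M : nat) (U : {set 'I_M}) (V : {set 'I_N}) (p q gamma : R),
    (N0 <= N)%nat -> (M <= N)%nat ->
    (0 < #|U|)%nat -> (#|U| <= #|V|)%nat ->
    0 <= p -> p < q -> q <= 1 -> 0 < gamma ->
    model_prob U V p q (Lambda_nonneg_event U V q gamma)
      >= 1 - c1 * Rpower (INR N) (- c2).
Proof.
exists 3, (1/5); split; first lra; split; first lra; exists 2%nat.
move=> N M U V p q g hN hMN hU hUV hp hpq hq hg.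
have hN2 : 2 <= INR N.
  have := le_INR 2 N (elimT leP hN); rewrite /=; lra.
set L := ln (INR N).
have hL : 0 < L.
  rewrite /L -ln_1; apply: ln_increasing; lra.
set m := INR #|U|.
set n := INR #|V|.
have hm : 0 < m by apply: lt_0_INR; apply/ltP.
have hmn : m <= n by apply: le_INR; apply/leP.
have hnN : n <= INR N.
  apply: le_INR; apply/leP; have := max_card (mem V); by rewrite card_ord.
have hn : 0 < n by lra.
set s2 := q * (1 - q).
have hs2 : 0 <= s2 by rewrite /s2; nra.
set T := tau N #|U| q.
set u := T / 3.
set a := sqrt (s2 * L / m).
set b := L / m.
have ha0 : 0 <= a by apply: sqrt_pos.
have hb0 : 0 < b by rewrite /b; apply: Rdiv_lt_0_compat.
have hmx1 : a <= Rmax a b by apply: Rmax_l.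
have hmx2 : b <= Rmax a b by apply: Rmax_r.
have hsq : 0 < 1 / sqrt m.
  apply: Rdiv_lt_0_compat; [lra| exact: sqrt_lt_R0].
have eu : u = 4 * Rmax a b + 4 * (1 / sqrt m) * Rmax a b.
  have hsm : 0 < sqrt m by apply: sqrt_lt_R0.
  rewrite /u /T /tau /sigma_q2 -/L -/m -/s2 -/a -/b. field; lra.
have hu4 : 4 * Rmax a b <= u.
  rewrite eu; have : 0 <= 4 * (1 / sqrt m) * Rmax a b.
    apply: Rmult_le_pos; lra.
  lra.
have hu0 : 0 <= u by lra.
have hu2 : 4 * L / m <= u.
  have : 4 * L / m = 4 * b by rewrite /b; field; lra.
  lra.
have hu1 : 16 * s2 * L / m <= u ^ 2.
  have e1 : 16 * s2 * L / m = (4 * a) ^ 2.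
    rewrite /a; replace ((4 * sqrt (s2 * L / m)) ^ 2) with (16 * (sqrt (s2 * L / m) * sqrt (s2 * L / m))) by ring.
    rewrite sqrt_sqrt; first (field; lra).
    apply: Rmult_le_pos; [apply: Rmult_le_pos; lra| left; apply: Rinv_0_lt_compat; lra].
  rewrite e1; apply: pow_incr; lra.
have hmass : forall A, 0 <= model_mass U V p q A by move=> A; apply: mass_ge0; lra.
have hn1 : 1 <= n by rewrite /n; have := le_INR 1 #|V| (elimT leP (leq_trans hU hUV)); rewrite /=.
set e := exp (- (6/5) * L).
pose B1 := fun (i : 'I_M) (A : bmat M N) => Rleb (n * (1 - q) + n * u) (INR (mu_bar V A i)).
pose B2 := fun (j : 'I_N) (A : bmat M N) => Rleb (m * (1 - q) + m * u) (INR (nu_bar U A j)).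
pose B3 := fun (A : bmat M N) => Rleb (INR (s_bar U V A)) (m * n * (1 - q) - m * n * u).
have t1 : forall i, i \in U ->
    \big[Rplus/0]_(A : bmat M N | B1 i A) model_mass U V p q A <= e.
  move=> i hi.
  set S := [set k : 'I_M * 'I_N | (k.1 == i) && (k.2 \in V)].
  have cS : #|S| = #|V| by apply: card_row.
  have HS : S \subset setX U V.
    by apply/subsetP => [[x y]]; rewrite !inE /= => /andP [/eqP -> ->]; rewrite hi.
  have [f1 f2] := tfacts n m u s2 L hm hmn hs2 hL hu0 hu1 hu2.
  apply: (tail_up M N U V p q S (B1 i) (n * u) L hp hpq hq HS hL); [rewrite cS; exact f1 | exact f2 |].
  move=> A; rewrite /B1 /S cnt_row cS => /Rleb_true; rewrite -/n; lra.
have t2 : forall j, j \in V ->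
    \big[Rplus/0]_(A : bmat M N | B2 j A) model_mass U V p q A <= e.
  move=> j hj.
  set S := [set k : 'I_M * 'I_N | (k.1 \in U) && (k.2 == j)].
  have cS : #|S| = #|U| by apply: card_col.
  have HS : S \subset setX U V.
    by apply/subsetP => [[x y]]; rewrite !inE /= => /andP [-> /eqP ->]; rewrite hj.
  have [f1 f2] := tfacts m m u s2 L hm (Rle_refl m) hs2 hL hu0 hu1 hu2.
  apply: (tail_up M N U V p q S (B2 j) (m * u) L hp hpq hq HS hL); [rewrite cS; exact f1 | exact f2 |].
  move=> A; rewrite /B2 /S cnt_col cS => /Rleb_true; rewrite -/m; lra.
have t3 : \big[Rplus/0]_(A : bmat M N | B3 A) model_mass U V p q A <= e.
  have cS : INR #|setX U V| = m * n by rewrite cardsX mult_INR.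
  have HS : setX U V \subset setX U V by apply: subxx.
  have hmn' : m <= m * n by nra.
  have [f1 f2] := tfacts (m * n) m u s2 L hm hmn' hs2 hL hu0 hu1 hu2.
  apply: (tail_low M N U V p q (setX U V) B3 (m * n * u) L hp hpq hq HS hL); [rewrite cS; exact f1 | exact f2 |].
  move=> A; rewrite /B3 cnt_all cS => /Rleb_true; lra.
set E := Lambda_nonneg_event U V q g.
have hunion : \big[Rplus/0]_(A : bmat M N | ~~ E A) model_mass U V p q A <=
  \big[Rplus/0]_(i | i \in U) \big[Rplus/0]_(A : bmat M N | B1 i A) model_mass U V p q A
  + \big[Rplus/0]_(j | j \in V) \big[Rplus/0]_(A : bmat M N | B2 j A) model_mass U V p q A
  + \big[Rplus/0]_(A : bmat M N | B3 A) model_mass U V p q A.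
  apply: union3 => // A.
  move/forallPn => [i /forallPn [j]].
  rewrite negb_imply => /andP [/andP [hiU hjV] hneg].
  case b1: (B1 i A); first by left; exists i.
  case b2: (B2 j A); first by right; left; exists j.
  case b3: (B3 A); first by right; right.
  exfalso; move/negP: hneg; apply; apply/Rleb_true.
  rewrite /Lambda /lambda_tilde; cbv zeta.
  apply: det => //.
  - by have := Rleb_false _ _ b1.
  - by have := Rleb_false _ _ b2.
  - by have := Rleb_false _ _ b3.
have htot : \big[Rplus/0]_(A : bmat M N) model_mass U V p q A = 1.
  have := mgf p q 1 (sub0set (setX U V)).
  rewrite cards0 /= => <-.
  apply: eq_bigr => A _; rewrite pow1; ring.
have hsplit0 := htot; rewrite (bigID E) /= in hsplit0.
have hsplit : \big[Rplus/0]_(A : bmat M N | E A) model_mass U V p q A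
   + \big[Rplus/0]_(A : bmat M N | ~~ E A) model_mass U V p q A = 1 by exact: hsplit0.
have hs1 : \big[Rplus/0]_(i | i \in U) \big[Rplus/0]_(A : bmat M N | B1 i A) model_mass U V p q A <= m * e.
  apply: Rle_trans (@sum_le _ (fun i => i \in U) _ (fun _ => e) t1) _.
  by rewrite big_const iter_Rplus; apply: Rle_refl.
have hs2' : \big[Rplus/0]_(j | j \in V) \big[Rplus/0]_(A : bmat M N | B2 j A) model_mass U V p q A <= n * e.
  apply: Rle_trans (@sum_le _ (fun j => j \in V) _ (fun _ => e) t2) _.
  by rewrite big_const iter_Rplus; apply: Rle_refl.
have hfin : (m + n + 1) * e <= 3 * Rpower (INR N) (- (1/5)).
  have eR : Rpower (INR N) (- (1/5)) = exp (- (1/5) * L) by [].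
  have ee : e = / INR N * exp (- (1/5) * L).
    rewrite /e -[/ INR N](exp_ln (/ INR N)); last (apply: Rinv_0_lt_compat; lra).
    rewrite ln_Rinv; last lra. rewrite -/L -exp_plus; congr exp; lra.
  rewrite eR ee.
  have hx := exp_pos (- (1/5) * L).
  have : (m + n + 1) * / INR N <= 3.
    apply: (Rmult_le_reg_r (INR N)); first lra.
    rewrite Rmult_assoc Rinv_l; lra.
  nra.
rewrite /model_prob; apply: Rle_ge.
lra.
Qed.
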